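(* Let $\tilde\eta$ be the corner-flip dynamics on $\Omega^0_L$ started from $\eta_0\in\Omega_L^0$ with $\eta_0(x)\ge\min(x+L,\,L-x,\,L^{3/4})$ for all $x$. Then with probability tending to $1$ as $L\to\infty$, $$\tilde\eta(x,t)\ge-L^{3/4}\quad\forall x\in\{-L,\dots,L\},\ \forall t\in[0,\exp(L^{1/4})].$$
   Context: $\Omega^0_L$ is the set of $\eta\in\mathbb Z^{2L+1}$ indexed by $\{-L,\dots,L\}$ with $\eta_{-L}=\eta_L=0$ and $|\eta_{x+1}-\eta_x|=1$ (no sign constraint). For $x\in\{-L+1,\dots,L-1\}$, $\eta^{(x)}$ coincides with $\eta$ except at $x$, where $\eta^{(x)}_x=\eta_x+2$ if $\eta_{x\pm1}=\eta_x+1$, $\eta_x-2$ if $\eta_{x\pm1}=\eta_x-1$, $\eta_x$ otherwise. The corner-flip dynamics is the continuous-time Markov chain on $\Omega_L^0$ in which each site $x$ carries an independent rate-one Poisson clock and, when it rings, $\eta$ is replaced by $\eta^{(x)}$. *)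

(* Defs.v *)
From Stdlib Require Import Reals ZArith List.
Open Scope R_scope.

(** Integer range [a; b] as a list (empty if b < a). *)
Definition zrange (a b : Z) : list Z :=
  map (fun i => (a + Z.of_nat i)%Z) (seq 0 (Z.to_nat (b - a + 1))).

(** Configurations: eta : Z -> Z, only the values on {-L..L} matter. *)
Definition in_Omega0 (L : nat) (eta : Z -> Z) : Prop :=
  eta (- Z.of_nat L)%Z = 0%Z /\ eta (Z.of_nat L) = 0%Z /\
  (forall x : Z, (- Z.of_nat L <= x < Z.of_nat L)%Z ->
     Z.abs (eta (x + 1)%Z - eta x) = 1%Z).

Definition flip (eta : Z -> Z) (x : Z) : Z -> Z :=
  fun y =>
    if Z.eqb y x then
      (if andb (Z.eqb (eta (x - 1)%Z) (eta x + 1)%Z)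
               (Z.eqb (eta (x + 1)%Z) (eta x + 1)%Z)
       then (eta x + 2)%Z
       else if andb (Z.eqb (eta (x - 1)%Z) (eta x - 1)%Z)
                    (Z.eqb (eta (x + 1)%Z) (eta x - 1)%Z)
            then (eta x - 2)%Z
            else eta x)
    else eta y.

(** Interior sites {-L+1, ..., L-1}, carrying the clocks. *)
Definition sites (L : nat) : list Z :=
  zrange (- Z.of_nat L + 1)%Z (Z.of_nat L - 1)%Z.

Definition nclocks (L : nat) : R := INR (length (sites L)).

Definition good (L : nat) (eta : Z -> Z) : bool :=
  forallb (fun x => if Rle_dec (- Rpower (INR L) (3/4)) (IZR (eta x))
                    then true else false)
          (zrange (- Z.of_nat L)%Z (Z.of_nat L)).

Definition ind (b : bool) : R := if b then 1 else 0.

(** Probability that the (uniformized) jump chain, which at each clock ring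
    picks a uniform site among the N interior sites and flips there, visits
    only good configurations during its first k steps (states 0..k). *)
Fixpoint p_stay (L : nat) (k : nat) (eta : Z -> Z) : R :=
  match k with
  | O => ind (good L eta)
  | S k' => ind (good L eta) *
            (/ nclocks L * fold_right Rplus 0
               (map (fun x => p_stay L k' (flip eta x)) (sites L)))
  end.

(** Summand of the law of the corner-flip dynamics: the superposition of the
    N independent rate-one clocks is a Poisson process of rate N with iid
    uniform site marks; k rings occur in [0,T] with Poisson(N T) probability. *)
Definition stay_term (L : nat) (eta0 : Z -> Z) (T : R) (k : nat) : R :=
  exp (- (nclocks L * T)) * (nclocks L * T) ^ k / INR (fact k)
  * p_stay L k eta0.

(** P(eta(x,t) >= -L^{3/4} for all x, all t in [0,T]) is the sum over k of
    stay_term L eta0 T k. *)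

(* Main.v *)
Require Import Defs.
From Stdlib Require Import Reals ZArith List Lia Lra Permutation Arith.
Open Scope R_scope.
Import ListNotations.

Definition po (lam : R) (k : nat) : R := exp (- lam) * lam ^ k / INR (fact k).

Lemma po_pos lam k : 0 <= lam -> 0 <= po lam k.
Proof. intro H. unfold po. apply Rmult_le_pos; [apply Rmult_le_pos; [left; apply exp_pos| apply pow_le; auto]|].
  left; apply Rinv_0_lt_compat, INR_fact_lt_0. Qed.

Lemma cv_const c : Un_cv (fun _ => c) c.
Proof. intros e He. exists O. intros. rewrite Rdist_eq. lra. Qed.

Lemma po_cv lam : 0 <= lam -> Un_cv (fun N => sum_f_R0 (po lam) N) 1.
Proof. intro H. assert (A : exp_in lam (exp lam)) by (exact (proj2_sig (exist_exp lam))).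
  assert (B := CV_mult _ _ _ _ (cv_const (exp (- lam))) A).
  replace 1 with (exp (- lam) * exp lam) by (rewrite <- exp_plus; replace (- lam + lam) with 0 by ring; apply exp_0).
  intros e He. destruct (B e He) as [N HN]. exists N. intros n Hn.
  replace (sum_f_R0 (po lam) n) with (exp (- lam) * sum_f_R0 (fun i => / INR (fact i) * lam ^ i) n).
  - apply HN; auto.
  - rewrite scal_sum. apply sum_eq. intros. unfold po. field. apply INR_fact_neq_0.
Qed.

Lemma po_partial_le lam N : 0 <= lam -> sum_f_R0 (po lam) N <= 1.
Proof. intro H. apply (growing_ineq (fun N => sum_f_R0 (po lam) N)).
  - intro n. rewrite tech5. assert (0 <= po lam (S n)) by (apply po_pos; auto). lra.
  - apply po_cv; auto. Qed.

Lemma po_step lam k : po lam (S k) * INR (S k) = lam * po lam k.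
Proof. unfold po. rewrite fact_simpl, mult_INR. simpl pow.
  assert (INR (fact k) <> 0) by apply INR_fact_neq_0. assert (INR (S k) <> 0) by (apply not_0_INR; lia).
  field. auto. Qed.

Lemma po_mean lam K : sum_f_R0 (fun k => po lam k * INR k) K = lam * sum_f_R0 (po lam) K - lam * po lam K.
Proof. induction K. - simpl. ring.
  - rewrite !tech5, IHK, po_step. ring. Qed.

Lemma series_bounds lam (p : nat -> R) c P : 0 <= lam -> 0 <= c ->
  (forall k, 0 <= p k <= 1) -> (forall k, 1 - p k <= c * (2 * INR k + 1)) ->
  Un_cv (fun N => sum_f_R0 (fun k => po lam k * p k) N) P ->
  1 - c * (2 * lam + 1) <= P <= 1.
Proof. intros Hl Hc Hp Hb HP. split.
  - apply Rle_cv_lim with (Un := fun N => sum_f_R0 (po lam) N - c * (2 * lam + 1)) (Vn := fun N => sum_f_R0 (fun k => po lam k * p k) N); auto.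
    + intro N.
      assert (A : sum_f_R0 (fun k => po lam k * (1 - p k)) N <= c * (2 * lam + 1)).
      { apply Rle_trans with (sum_f_R0 (fun k => c * (2 * (po lam k * INR k) + po lam k)) N).
        - apply sum_Rle. intros k _. assert (H0 := po_pos lam k Hl). specialize (Hb k).
          replace (c * (2 * (po lam k * INR k) + po lam k)) with (po lam k * (c * (2 * INR k + 1))) by ring.
          apply Rmult_le_compat_l; auto.
        - assert (S1 : sum_f_R0 (fun k => c * (2 * (po lam k * INR k) + po lam k)) N =
            c * (2 * sum_f_R0 (fun k => po lam k * INR k) N + sum_f_R0 (po lam) N)).
          { clear. induction N. simpl; ring. rewrite !tech5, IHN. ring. }
          rewrite S1, po_mean. apply Rmult_le_compat_l; auto.
          assert (B := po_partial_le lam N Hl). assert (C := po_pos lam N Hl).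
          assert (D : 0 <= sum_f_R0 (po lam) N) by (apply cond_pos_sum; intro; apply po_pos; auto).
          nra. }
      replace (sum_f_R0 (fun k => po lam k * p k) N) with
        (sum_f_R0 (po lam) N - sum_f_R0 (fun k => po lam k * (1 - p k)) N).
      * lra.
      * rewrite <- minus_sum. apply sum_eq. intros. ring.
    + replace (1 - c * (2 * lam + 1)) with (1 - c * (2 * lam + 1)) by ring.
      apply CV_minus; [apply po_cv; auto| apply cv_const].
  - apply Rle_cv_lim with (Un := fun N => sum_f_R0 (fun k => po lam k * p k) N) (Vn := fun N => sum_f_R0 (po lam) N); auto.
    + intro N. apply sum_Rle. intros k _. assert (H0 := po_pos lam k Hl). specialize (Hp k). nra.
    + apply po_cv; auto.
Qed.

Definition Rs (l : list R) : R := fold_right Rplus 0 l.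

Lemma Rs_app l1 l2 : Rs (l1 ++ l2) = Rs l1 + Rs l2.
Proof. induction l1; simpl; [lra|]. unfold Rs in *; simpl; rewrite IHl1; lra. Qed.

Lemma Rs_perm l l' : Permutation l l' -> Rs l = Rs l'.
Proof. induction 1; unfold Rs in *; simpl; lra. Qed.

Lemma sum_plus {A} (f g : A -> R) l :
  Rs (map (fun x => f x + g x) l) = Rs (map f l) + Rs (map g l).
Proof. induction l; unfold Rs in *; simpl; lra. Qed.

Lemma sum_scal {A} (c : R) (f : A -> R) l :
  Rs (map (fun x => c * f x) l) = c * Rs (map f l).
Proof. induction l; unfold Rs in *; simpl; lra. Qed.

Lemma sum_const {A} (c : R) (l : list A) :
  Rs (map (fun _ => c) l) = c * INR (length l).
Proof. induction l; unfold Rs in *; simpl map; simpl length; [simpl; lra|].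
  rewrite S_INR; simpl; lra. Qed.

Lemma sum_ext {A} (f g : A -> R) l :
  (forall x, In x l -> f x = g x) -> Rs (map f l) = Rs (map g l).
Proof. intro H. f_equal. apply map_ext_in. auto. Qed.

Lemma sum_le {A} (f g : A -> R) l :
  (forall x, In x l -> f x <= g x) -> Rs (map f l) <= Rs (map g l).
Proof. induction l; intro H; unfold Rs in *; simpl; [lra|].
  assert (f a <= g a) by (apply H; left; auto).
  assert (fold_right Rplus 0 (map f l) <= fold_right Rplus 0 (map g l)) by (apply IHl; intros; apply H; right; auto).
  lra. Qed.

Lemma sum_nonneg {A} (f : A -> R) l :
  (forall x, In x l -> 0 <= f x) -> 0 <= Rs (map f l).
Proof. intro H. rewrite <- (Rmult_0_l (INR (length l))). rewrite <- sum_const.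
  apply sum_le. auto. Qed.

Lemma sum_swap {A B} (F : A -> B -> R) la lb :
  Rs (map (fun a => Rs (map (fun b => F a b) lb)) la) =
  Rs (map (fun b => Rs (map (fun a => F a b) la)) lb).
Proof. induction la; simpl.
  - transitivity (Rs (map (fun _ : B => 0) lb)); [rewrite sum_const; unfold Rs; simpl; lra | reflexivity].
  - unfold Rs at 1; simpl. fold (Rs (map (fun a => Rs (map (fun b => F a b) lb)) la)).
    rewrite IHla. rewrite <- sum_plus. reflexivity. Qed.

Lemma sum_filter_le {A} (f : A -> R) (p : A -> bool) l :
  (forall x, In x l -> 0 <= f x) -> Rs (map f (filter p l)) <= Rs (map f l).
Proof. induction l; intro H; simpl; [lra|].
  assert (0 <= f a) by (apply H; left; auto).
  assert (Rs (map f (filter p l)) <= Rs (map f l)) by (apply IHl; intros; apply H; right; auto).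
  destruct (p a); unfold Rs in *; simpl; lra. Qed.

Lemma avg_bounds {A} (f : A -> R) l :
  (forall x, In x l -> 0 <= f x <= 1) ->
  0 <= / INR (length l) * Rs (map f l) <= 1.
Proof. intro H. destruct l as [|a l'].
  - unfold Rs; simpl. lra.
  - set (l := a :: l') in *.
    assert (Hp : 0 < INR (length l)) by (apply lt_0_INR; simpl; lia).
    assert (H1 : 0 <= Rs (map f l)) by (apply sum_nonneg; intros; apply H; auto).
    assert (H2 : Rs (map f l) <= Rs (map (fun _ => 1) l)) by (apply sum_le; intros; apply H; auto).
    rewrite sum_const in H2. split.
    + apply Rmult_le_pos; [left; apply Rinv_0_lt_compat; auto| auto].
    + apply (Rmult_le_reg_l (INR (length l))); auto. rewrite <- Rmult_assoc, Rinv_r by lra. lra.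
Qed.

Fixpoint allb (n : nat) : list (list bool) :=
  match n with
  | O => [nil]
  | S n => map (cons true) (allb n) ++ map (cons false) (allb n)
  end.

Definition stepz (b : bool) : Z := if b then 1%Z else (-1)%Z.

Fixpoint hgt (s : list bool) (i : nat) {struct i} : Z :=
  match i with
  | O => 0%Z
  | S i => match s with b :: s => (stepz b + hgt s i)%Z | nil => 0%Z end
  end.

Fixpoint ntrue (s : list bool) : nat :=
  match s with nil => O | b :: s => ((if b then 1 else 0) + ntrue s)%nat end.

Fixpoint swap (i : nat) (s : list bool) : list bool :=
  match i, s with
  | O, a :: b :: t => b :: a :: t
  | S i, a :: t => a :: swap i t
  | _, _ => s
  end.

Lemma In_allb n s : In s (allb n) <-> length s = n.
Proof. revert s; induction n; intro s; simpl.
  - split; [intros [<-|[]]; auto| destruct s; simpl; auto; discriminate].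
  - rewrite in_app_iff, !in_map_iff. split.
    + intros [[x [<- Hx]]|[x [<- Hx]]]; simpl; f_equal; apply IHn; auto.
    + destruct s as [|b s]; simpl; [discriminate|]. intro H. injection H; intro H'.
      apply IHn in H'. destruct b; [left|right]; exists s; auto.
Qed.

Lemma NoDup_allb n : NoDup (allb n).
Proof. induction n; simpl. constructor; auto. constructor.
  apply NoDup_app.
  - apply NoDup_map_NoDup_ForallPairs; auto. intros x y _ _ H; injection H; auto.
  - apply NoDup_map_NoDup_ForallPairs; auto. intros x y _ _ H; injection H; auto.
  - intros a Ha Hb. apply in_map_iff in Ha, Hb. destruct Ha as [x [<- _]]. destruct Hb as [y [H _]]. discriminate.
Qed.

Lemma swap_invol i s : swap i (swap i s) = s.
Proof. revert s; induction i; intros [|a t]; simpl; auto;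
  try (destruct t as [|b t]; simpl; auto; try (destruct a, b; lia); fail); try rewrite IHi; auto.
Qed.

Lemma swap_length i s : length (swap i s) = length s.
Proof. revert s; induction i; intros [|a t]; simpl; auto;
  try (destruct t as [|b t]; simpl; auto; try (destruct a, b; lia); fail); try rewrite IHi; auto.
Qed.

Lemma swap_ntrue i s : ntrue (swap i s) = ntrue s.
Proof. revert s; induction i; intros [|a t]; simpl; auto;
  try (destruct t as [|b t]; simpl; auto; try (destruct a, b; lia); fail); try rewrite IHi; auto.
Qed.

Definition OL (L : nat) : list (list bool) :=
  filter (fun s => Nat.eqb (ntrue s) L) (allb (2 * L)).

Lemma In_OL L s : In s (OL L) <-> length s = (2 * L)%nat /\ ntrue s = L.
Proof. unfold OL. rewrite filter_In, In_allb, Nat.eqb_eq. tauto. Qed.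

Lemma perm_swap_OL L i : Permutation (map (swap i) (OL L)) (OL L).
Proof. apply NoDup_Permutation.
  - apply NoDup_map_NoDup_ForallPairs.
    + intros x y _ _ H. rewrite <- (swap_invol i x), H, swap_invol. auto.
    + apply NoDup_filter, NoDup_allb.
  - apply NoDup_filter, NoDup_allb.
  - intro x. rewrite in_map_iff. split.
    + intros [y [<- Hy]]. apply In_OL in Hy. apply In_OL. rewrite swap_length, swap_ntrue. auto.
    + intro H. exists (swap i x). rewrite swap_invol. split; auto.
      apply In_OL in H. apply In_OL. rewrite swap_length, swap_ntrue. auto.
Qed.

Lemma hgt_S s i : (i < length s)%nat -> hgt s (S i) = (hgt s i + stepz (nth i s false))%Z.
Proof. revert i; induction s as [|b s IH]; intros i Hi; simpl in Hi; [lia|].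
  destruct i; [simpl; lia|].
  change (hgt (b::s) (S (S i))) with (stepz b + hgt s (S i))%Z.
  change (hgt (b::s) (S i)) with (stepz b + hgt s i)%Z.
  rewrite IH by lia. simpl nth. lia. Qed.

Lemma hgt_len s : hgt s (length s) = (2 * Z.of_nat (ntrue s) - Z.of_nat (length s))%Z.
Proof. induction s as [|b s IH]; [simpl; lia|].
  change (hgt (b::s) (length (b::s))) with (stepz b + hgt s (length s))%Z.
  rewrite IH. change (ntrue (b::s)) with ((if b then 1 else 0) + ntrue s)%nat.
  change (length (b::s)) with (S (length s)). destruct b; unfold stepz; lia. Qed.

Lemma hgt_lip s i j : (i <= j <= length s)%nat ->
  (Z.abs (hgt s j - hgt s i) <= Z.of_nat j - Z.of_nat i)%Z.
Proof. intros [H1 H2]. induction j. - assert (i = 0%nat) by lia. subst. simpl. lia.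
  - destruct (Nat.eq_dec i (S j)). + subst. lia.
    + rewrite hgt_S by lia. assert (IH := IHj ltac:(lia) ltac:(lia)).
      destruct (nth j s false); unfold stepz; lia. Qed.

Lemma hgt_swap_other i s j : (S (S i) <= length s)%nat -> j <> S i ->
  hgt (swap i s) j = hgt s j.
Proof. revert s j; induction i; intros s j Hl Hj.
  - destruct s as [|a [|b t]]; simpl in Hl; try lia. simpl.
    destruct j as [|[|j]]; simpl; auto; [lia|]. lia.
  - destruct s as [|a t]; simpl in Hl; [lia|]. simpl.
    destruct j; simpl; auto. rewrite IHi; auto; lia.
Qed.

Lemma nth_swap0 i s : (S (S i) <= length s)%nat -> nth i (swap i s) false = nth (S i) s false.
Proof. revert s; induction i; intros s Hl.
  - destruct s as [|a [|b t]]; simpl in Hl; try lia. reflexivity.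
  - destruct s as [|a t]; simpl in Hl; [lia|]. simpl. apply IHi. lia. Qed.

Lemma hgt_swap_mid i s : (S (S i) <= length s)%nat ->
  hgt (swap i s) (S i) = (hgt s i + stepz (nth (S i) s false))%Z.
Proof. intro Hl. rewrite hgt_S by (rewrite swap_length; lia).
  rewrite hgt_swap_other by lia. rewrite nth_swap0 by lia. reflexivity. Qed.

Definition conf (L : nat) (s : list bool) : Z -> Z :=
  fun y => hgt s (Z.to_nat (y + Z.of_nat L)).

Definition agree (L : nat) (e1 e2 : Z -> Z) : Prop :=
  forall y, (- Z.of_nat L <= y <= Z.of_nat L)%Z -> e1 y = e2 y.

Lemma In_zrange a b y : In y (zrange a b) <-> (a <= y <= b)%Z.
Proof. unfold zrange. rewrite in_map_iff. split.
  - intros [i [<- Hi]]. apply in_seq in Hi. lia.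
  - intro H. exists (Z.to_nat (y - a)). split; [lia|]. apply in_seq. lia. Qed.

Lemma In_sites L x : In x (sites L) <-> (- Z.of_nat L + 1 <= x <= Z.of_nat L - 1)%Z.
Proof. unfold sites. apply In_zrange. Qed.

Lemma length_zrange a b : length (zrange a b) = Z.to_nat (b - a + 1).
Proof. unfold zrange. rewrite length_map, length_seq. auto. Qed.

Lemma length_sites L : length (sites L) = (2 * L - 1)%nat.
Proof. unfold sites. rewrite length_zrange. lia. Qed.

Lemma flip_conf L s x : length s = (2 * L)%nat -> In x (sites L) ->
  agree L (flip (conf L s) x) (conf L (swap (Z.to_nat (x + Z.of_nat L - 1)) s)).
Proof. intros Hl Hx. apply In_sites in Hx. intros y Hy.
  set (i := Z.to_nat (x + Z.of_nat L - 1)).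
  unfold flip. destruct (Z.eqb_spec y x).
  - subst y. unfold conf.
    replace (Z.to_nat (x + Z.of_nat L)) with (S i) by lia.
    replace (Z.to_nat (x - 1 + Z.of_nat L)) with i by lia.
    replace (Z.to_nat (x + 1 + Z.of_nat L)) with (S (S i)) by lia.
    rewrite hgt_swap_mid by lia. rewrite (hgt_S s (S i)) by lia. rewrite (hgt_S s i) by lia.
    destruct (nth i s false), (nth (S i) s false); simpl stepz;
    repeat match goal with |- context [Z.eqb ?a ?b] => destruct (Z.eqb_spec a b) end; simpl; lia.
  - unfold conf. rewrite hgt_swap_other; auto; lia.
Qed.

Lemma conf_Omega L s : In s (OL L) -> in_Omega0 L (conf L s).
Proof. intro H. apply In_OL in H. destruct H as [Hl Hn]. unfold in_Omega0, conf. split; [|split].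
  - replace (Z.to_nat (- Z.of_nat L + Z.of_nat L)) with O by lia. reflexivity.
  - replace (Z.to_nat (Z.of_nat L + Z.of_nat L)) with (length s) by lia.
    rewrite hgt_len. lia.
  - intros x Hx. replace (Z.to_nat (x + 1 + Z.of_nat L)) with (S (Z.to_nat (x + Z.of_nat L))) by lia.
    rewrite hgt_S by lia. destruct (nth _ s false); simpl; lia.
Qed.

Lemma conf_bounds L s y : In s (OL L) -> (- Z.of_nat L <= y <= Z.of_nat L)%Z ->
  (conf L s y <= y + Z.of_nat L /\ conf L s y <= Z.of_nat L - y /\
   - (y + Z.of_nat L) <= conf L s y /\ - (Z.of_nat L - y) <= conf L s y)%Z.
Proof. intros H Hy. apply In_OL in H. destruct H as [Hl Hn]. unfold conf.
  set (j := Z.to_nat (y + Z.of_nat L)).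
  assert (A := hgt_lip s 0 j ltac:(lia)). assert (B := hgt_lip s j (length s) ltac:(lia)).
  rewrite hgt_len in B. simpl in A. lia. Qed.

Lemma forallb_ext_in {A} (f g : A -> bool) l :
  (forall x, In x l -> f x = g x) -> forallb f l = forallb g l.
Proof. induction l; simpl; intros H; auto. rewrite H by auto. rewrite IHl; auto. Qed.

Lemma good_agree L e1 e2 : agree L e1 e2 -> good L e1 = good L e2.
Proof. intro H. unfold good. apply forallb_ext_in. intros x Hx. apply In_zrange in Hx.
  rewrite H by lia. reflexivity. Qed.

Lemma flip_agree L e1 e2 x : agree L e1 e2 -> In x (sites L) -> agree L (flip e1 x) (flip e2 x).
Proof. intros H Hx. apply In_sites in Hx. intros y Hy. unfold flip.
  rewrite (H x), (H (x-1)%Z), (H (x+1)%Z), (H y) by lia. reflexivity. Qed.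

Definition avg (L : nat) (f : (Z -> Z) -> R) (e : Z -> Z) : R :=
  / nclocks L * Rs (map (fun x => f (flip e x)) (sites L)).

Lemma p_stay_S L k e : p_stay L (S k) e = Defs.ind (good L e) * avg L (p_stay L k) e.
Proof. reflexivity. Qed.

Fixpoint pc (L : nat) (k : nat) (e : Z -> Z) : R :=
  match k with
  | O => Defs.ind (good L e)
  | S k' => Defs.ind (good L e) *
      (/2 * pc L k' e + /2 * (/ nclocks L * fold_right Rplus 0
          (map (fun x => pc L k' (flip e x)) (sites L))))
  end.

Lemma pc_S L k e : pc L (S k) e = Defs.ind (good L e) * (/2 * pc L k e + /2 * avg L (pc L k) e).
Proof. reflexivity. Qed.

Lemma avg_ext L f g e1 e2 : (forall x, In x (sites L) -> f (flip e1 x) = g (flip e2 x)) ->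
  avg L f e1 = avg L g e2.
Proof. intro H. unfold avg. f_equal. apply sum_ext. auto. Qed.

Lemma p_stay_agree L k e1 e2 : agree L e1 e2 -> p_stay L k e1 = p_stay L k e2.
Proof. revert e1 e2; induction k; intros e1 e2 H; simpl p_stay.
  - rewrite (good_agree _ _ _ H). auto.
  - rewrite (good_agree _ _ _ H). f_equal. f_equal. f_equal. apply map_ext_in.
    intros x Hx. apply IHk. apply flip_agree; auto. Qed.

Lemma pc_agree L k e1 e2 : agree L e1 e2 -> pc L k e1 = pc L k e2.
Proof. revert e1 e2; induction k; intros e1 e2 H; rewrite ?pc_S.
  - simpl. rewrite (good_agree _ _ _ H). auto.
  - rewrite (good_agree _ _ _ H), (IHk e1 e2 H). f_equal. f_equal. f_equal.
    apply avg_ext. intros x Hx. apply IHk. apply flip_agree; auto. Qed.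

Lemma ind_bounds (b : bool) : 0 <= Defs.ind b <= 1.
Proof. destruct b; simpl; lra. Qed.

Lemma avg_bounds' L f e : (forall e', 0 <= f e' <= 1) -> 0 <= avg L f e <= 1.
Proof. intro H. unfold avg, nclocks.
  replace (length (sites L)) with (length (map (fun x => f (flip e x)) (sites L))) by apply length_map.
  assert (A := avg_bounds (fun r => r) (map (fun x => f (flip e x)) (sites L))).
  rewrite map_id in A. apply A. intros r Hr. apply in_map_iff in Hr. destruct Hr as [x [<- _]]. auto. Qed.

Lemma p_stay_bounds L k e : 0 <= p_stay L k e <= 1.
Proof. revert e; induction k; intro e. - apply ind_bounds.
  - rewrite p_stay_S. assert (A := ind_bounds (good L e)). assert (B := avg_bounds' L _ e IHk). nra. Qed.

Lemma pc_bounds L k e : 0 <= pc L k e <= 1.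
Proof. revert e; induction k; intro e. - apply ind_bounds.
  - rewrite pc_S. assert (A := ind_bounds (good L e)). assert (B := avg_bounds' L _ e IHk).
    assert (C := IHk e). nra. Qed.

Lemma nclocks_pos L : (1 <= L)%nat -> 0 < nclocks L.
Proof. intro H. unfold nclocks. rewrite length_sites. apply lt_0_INR. lia. Qed.

Lemma avg_affine L f a b e : (1 <= L)%nat ->
  avg L (fun e' => a + b * f e') e = a + b * avg L f e.
Proof. intro HL. unfold avg. rewrite sum_plus, sum_const, sum_scal.
  fold (nclocks L). assert (H := nclocks_pos L HL). field. lra. Qed.

Lemma avg_le L f g e : (1 <= L)%nat -> (forall x, In x (sites L) -> f (flip e x) <= g (flip e x)) ->
  avg L f e <= avg L g e.
Proof. intros HL H. unfold avg. apply Rmult_le_compat_l.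
  - left; apply Rinv_0_lt_compat, nclocks_pos; auto.
  - apply sum_le. auto. Qed.

Fixpoint beta (k j : nat) : R :=
  match k with
  | O => match j with O => 1 | S _ => 0 end
  | S k' => match j with O => 1 | S j' => /2 * beta k' j + /2 * beta k' j' end
  end.

Lemma beta_bounds k j : 0 <= beta k j <= 1.
Proof. revert j; induction k; intro j; destruct j; simpl; try lra.
  assert (A := IHk (S j)); assert (B := IHk j); lra. Qed.

Lemma beta_big k j : (k < j)%nat -> beta k j = 0.
Proof. revert j; induction k; intros j H; destruct j; simpl; try lia; auto.
  rewrite IHk, IHk by lia. lra. Qed.

Lemma beta_mono k j : beta k (S j) <= beta k j.
Proof. revert j; induction k; intro j; destruct j; simpl; try lra.
  - assert (A := beta_bounds k 1); assert (B := beta_bounds k 0); lra.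
  - assert (A := IHk (S j)); assert (B := IHk j); lra. Qed.

Lemma beta_sym k j : (j <= S k)%nat -> beta k j + beta k (S k - j)%nat = 1.
Proof. revert j; induction k; intros j H.
  - destruct j as [|[|j]]; simpl; lra || lia.
  - destruct j as [|j].
    + replace (S (S k) - 0)%nat with (S (S k)) by lia. rewrite (beta_big (S k) (S (S k))) by lia. simpl; lra.
    + simpl beta at 1.
      replace (S (S k) - S j)%nat with (S k - j)%nat by lia.
      destruct (Nat.eq_dec j (S k)).
      * subst. replace (S k - S k)%nat with O by lia. rewrite (beta_big k (S (S k))) by lia.
        rewrite (beta_big k (S k)) by lia. simpl. lra.
      * replace (S k - j)%nat with (S (S k - S j)) by lia. simpl beta at 3.
        assert (A := IHk (S j) ltac:(lia)). assert (B := IHk j ltac:(lia)).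
        replace (S k - j)%nat with (S (k - j)) in B by lia.
        replace (S k - S j)%nat with (k - j)%nat in A by lia. lra.
Qed.

Lemma beta_half j : / 2 <= beta (2 * j) j.
Proof. assert (A := beta_sym (2 * j) j ltac:(lia)).
  replace (S (2 * j) - j)%nat with (S j) in A by lia.
  assert (B := beta_mono (2 * j) j). lra. Qed.

Lemma key_lazy L k j e : (1 <= L)%nat ->
  beta k j * (1 - p_stay L j e) <= 1 - pc L k e.
Proof. intro HL. revert j e; induction k; intros j e.
  - destruct j; simpl beta. + simpl. lra. + assert (A := pc_bounds L 0 e). lra.
  - destruct j.
    + simpl beta; simpl p_stay. rewrite pc_S.
      assert (A := ind_bounds (good L e)). assert (B := pc_bounds L k e).
      assert (C := avg_bounds' L (pc L k) e (pc_bounds L k)). nra.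
    + rewrite pc_S, p_stay_S. destruct (good L e) eqn:Hg; simpl Defs.ind.
      * assert (A := IHk (S j) e). rewrite p_stay_S, Hg in A. simpl Defs.ind in A.
        assert (B : beta k j * (1 - avg L (p_stay L j) e) <= 1 - avg L (pc L k) e).
        { replace (1 - avg L (pc L k) e) with (avg L (fun e' => 1 + (-1) * pc L k e') e)
            by (rewrite avg_affine; auto; lra).
          replace (beta k j * (1 - avg L (p_stay L j) e)) with
            (avg L (fun e' => beta k j + (- beta k j) * p_stay L j e') e)
            by (rewrite avg_affine; auto; lra).
          apply avg_le; auto. intros x _. assert (C := IHk j (flip e x)). lra. }
        simpl beta. lra.
      * assert (A := beta_bounds (S k) (S j)). lra.
Qed.

Definition up (x : Z) (e : Z -> Z) : Z -> Z :=
  fun y => if Z.eqb y x then (Z.min (e (x-1)) (e (x+1)) + 1)%Z else e y.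
Definition dn (x : Z) (e : Z -> Z) : Z -> Z :=
  fun y => if Z.eqb y x then (Z.max (e (x-1)) (e (x+1)) - 1)%Z else e y.

Lemma lip_at L e x : in_Omega0 L e -> In x (sites L) ->
  (e (x-1) = e x + 1 \/ e (x-1) = e x - 1)%Z /\ (e (x+1) = e x + 1 \/ e (x+1) = e x - 1)%Z.
Proof. intros [_ [_ H]] Hx. apply In_sites in Hx.
  assert (A := H (x-1)%Z ltac:(lia)). assert (B := H x ltac:(lia)).
  replace (x - 1 + 1)%Z with x in A by lia. lia. Qed.

Ltac zcase := repeat match goal with |- context [Z.eqb ?a ?b] => destruct (Z.eqb_spec a b) end.

Lemma updn_flip L e x : in_Omega0 L e -> In x (sites L) ->
  (agree L (up x e) e /\ agree L (dn x e) (flip e x)) \/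
  (agree L (up x e) (flip e x) /\ agree L (dn x e) e).
Proof. intros HO Hx. destruct (lip_at L e x HO Hx) as [[A|A] [B|B]].
  - right; split; intros y Hy; unfold up, dn, flip; zcase; simpl; subst; lia.
  - left; split; intros y Hy; unfold up, dn, flip; zcase; simpl; subst; lia.
  - left; split; intros y Hy; unfold up, dn, flip; zcase; simpl; subst; lia.
  - left; split; intros y Hy; unfold up, dn, flip; zcase; simpl; subst; lia.
Qed.

Lemma up_Omega L e x : in_Omega0 L e -> In x (sites L) -> in_Omega0 L (up x e).
Proof. intros HO Hx. destruct (lip_at L e x HO Hx) as [A B]. assert (Hx' := Hx).
  apply In_sites in Hx'. destruct HO as [H1 [H2 H3]].
  split; [|split].
  - unfold up; zcase; lia.
  - unfold up; zcase; lia.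
  - intros y Hy. unfold up.
    destruct (Z.eq_dec y (x - 1)) as [->|n1]; [zcase; try lia; replace (x - 1 + 1)%Z with x by lia; lia|].
    destruct (Z.eq_dec y x) as [->|n2]; [zcase; lia|].
    specialize (H3 y Hy). zcase; lia. Qed.

Lemma dn_Omega L e x : in_Omega0 L e -> In x (sites L) -> in_Omega0 L (dn x e).
Proof. intros HO Hx. destruct (lip_at L e x HO Hx) as [A B]. assert (Hx' := Hx).
  apply In_sites in Hx'. destruct HO as [H1 [H2 H3]].
  split; [|split].
  - unfold dn; zcase; lia.
  - unfold dn; zcase; lia.
  - intros y Hy. unfold dn.
    destruct (Z.eq_dec y (x - 1)) as [->|n1]; [zcase; try lia; replace (x - 1 + 1)%Z with x by lia; lia|].
    destruct (Z.eq_dec y x) as [->|n2]; [zcase; lia|].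
    specialize (H3 y Hy). zcase; lia. Qed.

Definition zle (L : nat) (e1 e2 : Z -> Z) : Prop :=
  forall y, (- Z.of_nat L <= y <= Z.of_nat L)%Z -> (e1 y <= e2 y)%Z.

Lemma up_le L e1 e2 x : zle L e1 e2 -> In x (sites L) -> zle L (up x e1) (up x e2).
Proof. intros H Hx. apply In_sites in Hx. intros y Hy. unfold up.
  assert (A := H (x-1)%Z ltac:(lia)). assert (B := H (x+1)%Z ltac:(lia)). assert (C := H y Hy).
  zcase; simpl; lia. Qed.

Lemma dn_le L e1 e2 x : zle L e1 e2 -> In x (sites L) -> zle L (dn x e1) (dn x e2).
Proof. intros H Hx. apply In_sites in Hx. intros y Hy. unfold dn.
  assert (A := H (x-1)%Z ltac:(lia)). assert (B := H (x+1)%Z ltac:(lia)). assert (C := H y Hy).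
  zcase; simpl; lia. Qed.

Lemma good_mono L e1 e2 : zle L e1 e2 -> good L e1 = true -> good L e2 = true.
Proof. unfold good. intros H G. rewrite forallb_forall in *. intros x Hx.
  specialize (G x Hx). apply In_zrange in Hx. specialize (H x Hx).
  destruct (Rle_dec _ (IZR (e1 x))); [|discriminate].
  destruct (Rle_dec _ (IZR (e2 x))); auto. exfalso. apply n. apply Rle_trans with (IZR (e1 x)); auto.
  apply IZR_le; auto. Qed.

Lemma pc_updn L k e : (1 <= L)%nat -> in_Omega0 L e ->
  /2 * pc L k e + /2 * avg L (pc L k) e =
  / nclocks L * Rs (map (fun x => /2 * pc L k (up x e) + /2 * pc L k (dn x e)) (sites L)).
Proof. intros HL HO.
  rewrite (sum_ext _ (fun x => /2 * pc L k e + /2 * pc L k (flip e x))).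
  - rewrite sum_plus, sum_const, sum_scal. unfold avg, nclocks. fold (nclocks L).
    assert (H := nclocks_pos L HL). unfold nclocks in *. field. lra.
  - intros x Hx. destruct (updn_flip L e x HO Hx) as [[A B]|[A B]];
    rewrite (pc_agree L k _ _ A), (pc_agree L k _ _ B); lra.
Qed.

Lemma pc_mono L k e1 e2 : (1 <= L)%nat -> in_Omega0 L e1 -> in_Omega0 L e2 -> zle L e1 e2 ->
  pc L k e1 <= pc L k e2.
Proof. intro HL. revert e1 e2; induction k; intros e1 e2 H1 H2 H.
  - simpl. destruct (good L e1) eqn:G; simpl; [rewrite (good_mono L e1 e2 H G); simpl; lra|].
    apply ind_bounds.
  - rewrite !pc_S, (pc_updn L k e1 HL H1), (pc_updn L k e2 HL H2).
    set (A1 := / nclocks L * _). set (A2 := / nclocks L * _).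
    assert (HA : A1 <= A2).
    { unfold A1, A2. apply Rmult_le_compat_l. left; apply Rinv_0_lt_compat, nclocks_pos; auto.
      apply sum_le. intros x Hx.
      assert (U := IHk _ _ (up_Omega L e1 x H1 Hx) (up_Omega L e2 x H2 Hx) (up_le L e1 e2 x H Hx)).
      assert (D := IHk _ _ (dn_Omega L e1 x H1 Hx) (dn_Omega L e2 x H2 Hx) (dn_le L e1 e2 x H Hx)).
      lra. }
    assert (H0 : 0 <= A1).
    { unfold A1. apply Rmult_le_pos. left; apply Rinv_0_lt_compat, nclocks_pos; auto.
      apply sum_nonneg. intros x _. assert (P1 := pc_bounds L k (up x e1)).
      assert (P2 := pc_bounds L k (dn x e1)). lra. }
    destruct (good L e1) eqn:G.
    + rewrite (good_mono L e1 e2 H G). simpl. lra.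
    + simpl. assert (B := ind_bounds (good L e2)). assert (0 <= A2) by lra. nra.
Qed.

Lemma inv_sum L f : (1 <= L)%nat -> (forall e1 e2, agree L e1 e2 -> f e1 = f e2) ->
  Rs (map (fun s => avg L f (conf L s)) (OL L)) = Rs (map (fun s => f (conf L s)) (OL L)).
Proof. intros HL Hf. unfold avg. rewrite sum_scal. rewrite sum_swap.
  rewrite (sum_ext _ (fun _ => Rs (map (fun s => f (conf L s)) (OL L)))).
  - rewrite sum_const. fold (nclocks L). assert (H := nclocks_pos L HL). field. lra.
  - intros x Hx.
    rewrite (sum_ext _ (fun s => f (conf L (swap (Z.to_nat (x + Z.of_nat L - 1)) s)))).
    + rewrite <- (map_map (swap _) (fun s => f (conf L s))).
      apply Rs_perm. apply Permutation_map. apply perm_swap_OL.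
    + intros s Hs. apply Hf. apply flip_conf; auto. apply In_OL in Hs. tauto.
Qed.

Lemma stationarity L k : (1 <= L)%nat ->
  Rs (map (fun s => 1 - pc L k (conf L s)) (OL L)) <=
  INR (S k) * Rs (map (fun s => 1 - Defs.ind (good L (conf L s))) (OL L)).
Proof. intro HL. induction k.
  - simpl. lra.
  - set (B := Rs (map (fun s => 1 - Defs.ind (good L (conf L s))) (OL L))) in *.
    apply Rle_trans with (Rs (map (fun s => (1 - Defs.ind (good L (conf L s))) +
       (/2 * (1 - pc L k (conf L s)) + /2 * avg L (fun e => 1 + (-1) * pc L k e) (conf L s))) (OL L))).
    + apply sum_le. intros s _. rewrite pc_S, avg_affine by auto.
      assert (A := pc_bounds L k (conf L s)).
      assert (C := avg_bounds' L (pc L k) (conf L s) (pc_bounds L k)).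
      destruct (good L (conf L s)); simpl; lra.
    + rewrite !sum_plus, !sum_scal. fold B.
      rewrite (inv_sum L (fun e => 1 + (-1) * pc L k e)); auto.
      * replace (Rs (map (fun s => 1 + -1 * pc L k (conf L s)) (OL L))) with
          (Rs (map (fun s => 1 - pc L k (conf L s)) (OL L))) by (f_equal; apply map_ext; intro; lra).
        rewrite S_INR. assert (0 <= B).
        { apply sum_nonneg. intros. assert (A := ind_bounds (good L (conf L x))). lra. }
        lra.
      * intros e1 e2 H. rewrite (pc_agree L k _ _ H). auto.
Qed.

Definition leb (L : nat) (e0 : Z -> Z) (s : list bool) : bool :=
  forallb (fun y => Z.leb (conf L s y) (e0 y)) (zrange (- Z.of_nat L) (Z.of_nat L)).

Lemma coupling L k e0 : (1 <= L)%nat -> in_Omega0 L e0 ->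
  Rs (map (fun s => Defs.ind (leb L e0 s)) (OL L)) * (1 - pc L k e0) <=
  Rs (map (fun s => 1 - pc L k (conf L s)) (OL L)).
Proof. intros HL H0. rewrite Rmult_comm, <- sum_scal. apply sum_le. intros s Hs.
  assert (A := pc_bounds L k e0). assert (B := pc_bounds L k (conf L s)).
  destruct (leb L e0 s) eqn:E; simpl.
  - assert (pc L k (conf L s) <= pc L k e0); [|lra].
    apply pc_mono; auto. apply conf_Omega; auto.
    intros y Hy. unfold leb in E. rewrite forallb_forall in E.
    specialize (E y (proj2 (In_zrange _ _ _) Hy)). apply Z.leb_le in E. auto.
  - lra.
Qed.

Lemma hgt_cons0 b s : hgt (b :: s) 0 = hgt s 0.
Proof. reflexivity. Qed.
Lemma hgt_consS b s i : hgt (b :: s) (S i) = (stepz b + hgt s i)%Z.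
Proof. reflexivity. Qed.

Lemma length_allb n : length (allb n) = (2 ^ n)%nat.
Proof. induction n; simpl; auto. rewrite length_app, !length_map, IHn. lia. Qed.

Lemma chernoff n i th : (i <= n)%nat ->
  Rs (map (fun s => exp (th * IZR (hgt s i))) (allb n)) = (exp th + exp (- th)) ^ i * 2 ^ (n - i).
Proof. revert i; induction n; intros i Hi.
  - assert (i = O) by lia. subst. simpl. unfold Rs; simpl. rewrite Rmult_0_r, exp_0. lra.
  - simpl allb. rewrite map_app, Rs_app, !map_map. destruct i.
    + specialize (IHn 0%nat ltac:(lia)). simpl hgt in *. rewrite IHn.
      replace (S n - 0)%nat with (S (n - 0)) by lia. simpl. lra.
    + rewrite (sum_ext _ (fun s => exp th * exp (th * IZR (hgt s i)))).
      2:{ intros s _. rewrite hgt_consS, <- exp_plus. f_equal. simpl stepz. rewrite plus_IZR. simpl. ring. }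
      rewrite (sum_ext (fun x => exp (th * IZR (hgt (false :: x) (S i)))) (fun s => exp (-th) * exp (th * IZR (hgt s i)))).
      2:{ intros s _. rewrite hgt_consS, <- exp_plus. f_equal. simpl stepz. rewrite plus_IZR. simpl. ring. }
      rewrite !sum_scal, IHn by lia. replace (S n - S i)%nat with (n - i)%nat by lia. simpl. ring.
Qed.

Lemma exp_ub th : th < 1 -> exp th <= / (1 - th).
Proof. intro H. assert (A := exp_ineq1_le (- th)). assert (B : exp th * exp (- th) = 1).
  { rewrite <- exp_plus. replace (th + - th) with 0 by ring. apply exp_0. }
  assert (C := exp_pos th). apply (Rmult_le_reg_r (1 - th)); [lra|].
  rewrite Rinv_l by lra. nra. Qed.

Lemma cosh_bound th : -/2 <= th <= /2 -> exp th + exp (- th) <= 2 * exp (2 * th ^ 2).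
Proof. intro H. assert (A := exp_ub th ltac:(lra)). assert (B := exp_ub (- th) ltac:(lra)).
  assert (C := exp_ineq1_le (2 * th ^ 2)).
  assert (D : / (1 - th) + / (1 - - th) <= 2 * (1 + 2 * th ^ 2)).
  { replace (/ (1 - th) + / (1 - - th)) with (2 / (1 - th ^ 2)) by (field; repeat split; nra).
    apply (Rmult_le_reg_r (1 - th ^ 2)); [nra|]. unfold Rdiv. rewrite Rmult_assoc, Rinv_l by nra. assert (th ^ 2 <= /4) by nra. assert (0 <= th ^ 2) by nra. nra. }
  lra. Qed.

Lemma exp_pow' a i : exp a ^ i = exp (INR i * a).
Proof. induction i. - simpl. rewrite Rmult_0_l, exp_0. auto.
  - rewrite S_INR. simpl. rewrite IHi, <- exp_plus. f_equal. ring. Qed.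

Definition itop (m : R) (h : Z) : R := if Rlt_dec m (IZR h) then 1 else 0.
Definition ibot (m : R) (h : Z) : R := if Rlt_dec (IZR h) (- m) then 1 else 0.

Lemma tail_gen n i th m (f : Z -> R) sg : (i <= n)%nat -> 0 <= th <= /2 -> (sg = 1 \/ sg = -1) ->
  (forall h, 0 <= f h <= exp (sg * th * IZR h - th * m)) ->
  Rs (map (fun s => f (hgt s i)) (allb n)) <= 2 ^ n * exp (2 * INR n * th ^ 2 - th * m).
Proof. intros Hi Hth Hsg Hf.
  apply Rle_trans with (Rs (map (fun s => exp (- th * m) * exp ((sg * th) * IZR (hgt s i))) (allb n))).
  { apply sum_le. intros s _. rewrite <- exp_plus. replace (- th * m + sg * th * IZR (hgt s i)) with
      (sg * th * IZR (hgt s i) - th * m) by ring. apply Hf. }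
  rewrite sum_scal, chernoff by auto.
  assert (E : exp (sg * th) + exp (- (sg * th)) <= 2 * exp (2 * th ^ 2)).
  { replace (th ^ 2) with ((sg * th) ^ 2) by (destruct Hsg; subst; ring). apply cosh_bound. destruct Hsg; subst; lra. }
  assert (P : 0 <= exp (sg * th) + exp (- (sg * th))) by (assert (A := exp_pos (sg*th)); assert (B := exp_pos (-(sg*th))); lra).
  apply Rle_trans with (exp (- th * m) * ((2 * exp (2 * th ^ 2)) ^ i * 2 ^ (n - i))).
  { apply Rmult_le_compat_l; [left; apply exp_pos|]. apply Rmult_le_compat_r; [apply pow_le; lra|].
    apply pow_incr. auto. }
  rewrite Rpow_mult_distr, exp_pow'.
  replace (2 ^ n) with (2 ^ i * 2 ^ (n - i)) by (rewrite <- pow_add; f_equal; lia).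
  replace (2 * INR n * th ^ 2 - th * m) with ((- th * m + INR i * (2 * th ^ 2)) + (2 * (INR n - INR i) * th ^ 2)) by ring.
  rewrite (exp_plus (- th * m + _)), exp_plus.
  assert (1 <= exp (2 * (INR n - INR i) * th ^ 2)).
  { apply Rle_trans with (1 + 2 * (INR n - INR i) * th ^ 2); [| apply exp_ineq1_le].
    assert (INR i <= INR n) by (apply le_INR; auto). assert (0 <= th ^ 2) by nra. nra. }
  assert (0 < exp (- th * m)) by apply exp_pos. assert (0 < exp (INR i * (2 * th ^ 2))) by apply exp_pos.
  assert (0 < 2 ^ i) by (apply pow_lt; lra). assert (0 < 2 ^ (n - i)) by (apply pow_lt; lra).
  set (X := exp (- th * m) * exp (INR i * (2 * th ^ 2)) * 2 ^ i * 2 ^ (n - i)).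
  assert (0 <= X) by (unfold X; repeat apply Rmult_le_pos; lra).
  apply Rle_trans with (X * 1); [unfold X; lra|].
  apply Rle_trans with (X * exp (2 * (INR n - INR i) * th ^ 2)); [apply Rmult_le_compat_l; auto|].
  unfold X; lra.
Qed.

Definition cnt (n k : nat) : nat := length (filter (fun s => Nat.eqb (ntrue s) k) (allb n)).

Lemma filter_map_len {A B} (p : B -> bool) (g : A -> B) l :
  length (filter p (map g l)) = length (filter (fun x => p (g x)) l).
Proof. induction l; simpl; auto. destruct (p (g a)); simpl; auto. Qed.

Lemma cnt_SS n k : cnt (S n) (S k) = (cnt n k + cnt n (S k))%nat.
Proof. unfold cnt. simpl allb. rewrite filter_app, length_app, !filter_map_len. reflexivity. Qed.

Lemma cnt_S0 n : cnt (S n) 0 = cnt n 0.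
Proof. unfold cnt. simpl allb. rewrite filter_app, length_app, !filter_map_len. simpl.
  assert (forall l : list (list bool), length (filter (fun _ => false) l) = 0%nat) as H
    by (induction l; simpl; auto). rewrite H. reflexivity. Qed.

Lemma cnt_0 k : cnt 0 k = if Nat.eqb k 0 then 1%nat else 0%nat.
Proof. unfold cnt. simpl. destruct k; reflexivity. Qed.

Lemma cnt_big n k : (n < k)%nat -> cnt n k = 0%nat.
Proof. revert k; induction n; intros k H.
  - rewrite cnt_0. destruct k; [lia|reflexivity].
  - destruct k; [lia|]. rewrite cnt_SS, !IHn by lia. reflexivity. Qed.

Lemma cnt_n0 n : cnt n 0 = 1%nat.
Proof. induction n; [reflexivity|]. rewrite cnt_S0. auto. Qed.

Lemma cnt_fact n k : (k <= n)%nat -> (cnt n k * fact k * fact (n - k) = fact n)%nat.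
Proof. revert k; induction n; intros k H.
  - assert (k = O) by lia. subst. reflexivity.
  - destruct k. + rewrite cnt_n0. simpl. lia.
    + rewrite cnt_SS. destruct (Nat.eq_dec k n).
      * subst. rewrite (cnt_big n (S n)) by lia. assert (A := IHn n ltac:(lia)).
        rewrite Nat.sub_diag in A. replace (S n - S n)%nat with O by lia. simpl in A |- *. nia.
      * assert (A := IHn k ltac:(lia)). assert (B := IHn (S k) ltac:(lia)).
        replace (S n - S k)%nat with (n - k)%nat by lia.
        replace (n - k)%nat with (S (n - S k)) in A |- * by lia.
        change (fact (S k)) with (S k * fact k)%nat in *.
        change (fact (S (n - S k))) with (S (n - S k) * fact (n - S k))%nat in *.
        change (fact (S n)) with (S n * fact n)%nat.
        nia.
Qed.

Lemma cnt_step n k : (S k <= n)%nat -> (cnt n (S k) * S k = cnt n k * (n - k))%nat.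
Proof. intro H. assert (A := cnt_fact n k ltac:(lia)). assert (B := cnt_fact n (S k) H).
  replace (n - k)%nat with (S (n - S k)) in A |- * by lia.
  change (fact (S k)) with (S k * fact k)%nat in B.
  change (fact (S (n - S k))) with (S (n - S k) * fact (n - S k))%nat in A.
  assert (P1 := lt_O_fact k). assert (P2 := lt_O_fact (n - S k)).
  apply (Nat.mul_cancel_r _ _ (fact k * fact (n - S k))); [lia|]. nia. Qed.

Lemma cnt_symm n k : (k <= n)%nat -> cnt n k = cnt n (n - k).
Proof. intro H. assert (A := cnt_fact n k H). assert (B := cnt_fact n (n - k) ltac:(lia)).
  replace (n - (n - k))%nat with k in B by lia.
  assert (P1 := lt_O_fact k). assert (P2 := lt_O_fact (n - k)).
  apply (Nat.mul_cancel_r _ _ (fact k * fact (n - k))); [lia|]. nia. Qed.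

Lemma cnt_up L k : (k <= L)%nat -> (cnt (2 * L) k <= cnt (2 * L) L)%nat.
Proof. intro H. induction L as [|L' IH] in k, H |- *.
  - assert (k = O) by lia. subst. auto.
  -
    remember (S L' - k)%nat as d. revert k H Heqd. induction d; intros k H Hd.
    + assert (k = S L') by lia. subst. auto.
    + assert (Hs := cnt_step (2 * S L') k ltac:(lia)).
      assert (cnt (2 * S L') k <= cnt (2 * S L') (S k))%nat by nia.
      specialize (IHd (S k) ltac:(lia) ltac:(lia)). lia.
Qed.

Lemma cnt_max L k : (cnt (2 * L) k <= cnt (2 * L) L)%nat.
Proof. destruct (le_lt_dec k L). - apply cnt_up; auto.
  - destruct (le_lt_dec k (2 * L)).
    + rewrite cnt_symm by auto. apply cnt_up. lia.
    + rewrite cnt_big by lia. lia. Qed.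

Lemma ntrue_le s : (ntrue s <= length s)%nat.
Proof. induction s; simpl; auto. destruct a; lia. Qed.

Lemma sum_filter_count (l : list (list bool)) n :
  (forall s, In s l -> (ntrue s <= n)%nat) ->
  fold_right plus 0%nat (map (fun k => length (filter (fun s => Nat.eqb (ntrue s) k) l)) (seq 0 (S n))) = length l.
Proof. induction l as [|a l IH]; intro H.
  - clear H. generalize (seq 0 (S n)). intro r. induction r; simpl; auto.
  - simpl length. rewrite <- IH by (intros; apply H; right; auto).
    assert (Ha := H a (or_introl eq_refl)). clear IH H.
    assert (G : forall r : list nat, NoDup r ->
      fold_right plus 0%nat (map (fun k => length (filter (fun s => Nat.eqb (ntrue s) k) (a :: l))) r) =
      ((if existsb (Nat.eqb (ntrue a)) r then 1 else 0) +
      fold_right plus 0%nat (map (fun k => length (filter (fun s => Nat.eqb (ntrue s) k) l)) r))%nat).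
    { induction r as [|k r IHr]; intro Hn; [reflexivity|]. inversion Hn; subst.
      cbn [map fold_right existsb]. rewrite IHr by auto. simpl filter. destruct (Nat.eqb_spec (ntrue a) k); simpl.
      - subst. assert (existsb (Nat.eqb (ntrue a)) r = false).
        { destruct (existsb (Nat.eqb (ntrue a)) r) eqn:E; auto. apply existsb_exists in E.
          destruct E as [x [Hx Ex]]. apply Nat.eqb_eq in Ex. subst. contradiction. }
        rewrite H. lia.
      - lia. }
    rewrite G by apply seq_NoDup.
    assert (existsb (Nat.eqb (ntrue a)) (seq 0 (S n)) = true).
    { apply existsb_exists. exists (ntrue a). split; [apply in_seq; lia| apply Nat.eqb_refl]. }
    rewrite H. lia.
Qed.

Lemma M_lower L : 2 ^ (2 * L) <= INR (S (2 * L)) * INR (length (OL L)).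
Proof.
  assert (A := sum_filter_count (allb (2 * L)) (2 * L)).
  rewrite length_allb in A. fold (cnt (2 * L)) in A.
  assert (B : forall r : list nat, (fold_right plus 0 (map (cnt (2 * L)) r) <= length r * cnt (2 * L) L)%nat).
  { induction r; cbn [map fold_right length]; [lia|]. assert (C := cnt_max L a). lia. }
  specialize (B (seq 0 (S (2 * L)))). rewrite length_seq in B.
  replace (map (fun k => length (filter (fun s => Nat.eqb (ntrue s) k) (allb (2 * L)))) (seq 0 (S (2 * L))))
    with (map (cnt (2 * L)) (seq 0 (S (2 * L)))) in A by reflexivity.
  rewrite A in B. 2:{ intros s Hs. apply In_allb in Hs. rewrite <- Hs. apply ntrue_le. }
  unfold OL. fold (cnt (2 * L) L). rewrite <- mult_INR.
  replace 2 with (INR 2) by reflexivity. rewrite <- pow_INR. apply le_INR. exact B.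
Qed.

Lemma sum_ge_elem {A} (f : A -> R) l x : In x l -> (forall y, In y l -> 0 <= f y) -> f x <= Rs (map f l).
Proof. induction l; simpl; intros Hx H; [contradiction|]. destruct Hx as [->|Hx].
  - assert (0 <= Rs (map f l)) by (apply sum_nonneg; auto). unfold Rs in *; simpl; lra.
  - assert (f x <= Rs (map f l)) by (apply IHl; auto). assert (0 <= f a) by auto. unfold Rs in *; simpl; lra. Qed.

Lemma forallb_false {A} (f : A -> bool) l : forallb f l = false -> exists x, In x l /\ f x = false.
Proof. induction l; simpl; [discriminate|]. intro H. destruct (f a) eqn:E.
  - destruct (IHl H) as [x [H1 H2]]. eauto. - eauto. Qed.

Lemma itop_b m h : 0 <= itop m h <= 1.
Proof. unfold itop. destruct Rlt_dec; lra. Qed.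
Lemma ibot_b m h : 0 <= ibot m h <= 1.
Proof. unfold ibot. destruct Rlt_dec; lra. Qed.

Definition mL (L : nat) : R := Rpower (INR L) (3/4).

Lemma bad_pt L s : In s (OL L) ->
  1 - Defs.ind (good L (conf L s)) <= Rs (map (fun i => ibot (mL L) (hgt s i)) (seq 0 (S (2 * L)))).
Proof. intro Hs. assert (P : 0 <= Rs (map (fun i => ibot (mL L) (hgt s i)) (seq 0 (S (2 * L)))))
    by (apply sum_nonneg; intros; apply ibot_b).
  destruct (good L (conf L s)) eqn:E; unfold Defs.ind; [lra|].
  unfold good in E. apply forallb_false in E. destruct E as [y [Hy Ey]]. apply In_zrange in Hy.
  destruct (Rle_dec _ _) as [|Hn]; [discriminate|].
  apply Rle_trans with (ibot (mL L) (hgt s (Z.to_nat (y + Z.of_nat L)))).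
  - unfold ibot. destruct (Rlt_dec _ _) as [|Hn2]; [lra|]. exfalso. apply Hn. unfold conf in *.
    apply Rnot_lt_le in Hn2. unfold mL in Hn2. lra.
  - apply (sum_ge_elem (fun i => ibot (mL L) (hgt s i))); [apply in_seq; lia| intros; apply ibot_b].
Qed.

Lemma top_pt L e0 s : In s (OL L) ->
  (forall x : Z, (- Z.of_nat L <= x <= Z.of_nat L)%Z ->
          Rmin (IZR x + INR L) (Rmin (INR L - IZR x) (Rpower (INR L) (3/4))) <= IZR (e0 x)) ->
  1 - Defs.ind (leb L e0 s) <= Rs (map (fun i => itop (mL L) (hgt s i)) (seq 0 (S (2 * L)))).
Proof. intros Hs H0. assert (P : 0 <= Rs (map (fun i => itop (mL L) (hgt s i)) (seq 0 (S (2 * L)))))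
    by (apply sum_nonneg; intros; apply itop_b).
  destruct (leb L e0 s) eqn:E; unfold Defs.ind; [lra|].
  unfold leb in E. apply forallb_false in E. destruct E as [y [Hy Ey]]. apply In_zrange in Hy.
  apply Z.leb_gt in Ey.
  apply Rle_trans with (itop (mL L) (hgt s (Z.to_nat (y + Z.of_nat L)))).
  - unfold itop. destruct (Rlt_dec _ _) as [|Hn2]; [lra|]. exfalso.
    apply Rnot_lt_le in Hn2. unfold mL in Hn2.
    destruct (conf_bounds L s y Hs Hy) as [B1 [B2 _]].
    specialize (H0 y Hy). fold (conf L s y) in Hn2.
    assert (C1 : IZR (conf L s y) <= IZR y + INR L) by (rewrite INR_IZR_INZ, <- plus_IZR; apply IZR_le; lia).
    assert (C2 : IZR (conf L s y) <= INR L - IZR y) by (rewrite INR_IZR_INZ, <- minus_IZR; apply IZR_le; lia).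
    assert (C3 : IZR (e0 y) < IZR (conf L s y)) by (apply IZR_lt; lia).
    assert (IZR (conf L s y) <= Rmin (IZR y + INR L) (Rmin (INR L - IZR y) (Rpower (INR L) (3/4)))).
    { apply Rmin_glb; auto. apply Rmin_glb; auto. }
    lra.
  - apply (sum_ge_elem (fun i => itop (mL L) (hgt s i))); [apply in_seq; lia| intros; apply itop_b].
Qed.

Lemma E_bound L th (f : Z -> R) sg : 0 <= th <= /2 -> (sg = 1 \/ sg = -1) ->
  (forall h, 0 <= f h <= exp (sg * th * IZR h - th * mL L)) ->
  Rs (map (fun s => Rs (map (fun i => f (hgt s i)) (seq 0 (S (2 * L))))) (OL L)) <=
  INR (S (2 * L)) * (2 ^ (2 * L) * exp (2 * INR (2 * L) * th ^ 2 - th * mL L)).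
Proof. intros Hth Hsg Hf.
  apply Rle_trans with (Rs (map (fun s => Rs (map (fun i => f (hgt s i)) (seq 0 (S (2 * L))))) (allb (2 * L)))).
  { apply sum_filter_le. intros. apply sum_nonneg. intros. apply Hf. }
  rewrite sum_swap.
  match goal with |- _ <= INR ?a * ?C => replace (INR a * C) with (Rs (map (fun _ => C) (seq 0 a))) by (rewrite sum_const, length_seq; ring) end.
  apply sum_le. intros i Hi. apply in_seq in Hi. apply tail_gen with sg; auto. lia.
Qed.

Lemma u_facts L : (1 <= L)%nat ->
  let u := Rpower (INR L) (1/4) in
  1 <= u /\ INR L = u ^ 4 /\ mL L = u ^ 3.
Proof. intros HL u. assert (HL' : 1 <= INR L) by (apply (le_INR 1); auto).
  assert (Hp : 0 < INR L) by lra.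
  assert (Hu : 0 < u) by (unfold u, Rpower; apply exp_pos).
  split; [|split].
  - unfold u. apply Rle_trans with (Rpower (INR L) 0); [rewrite Rpower_O; lra | apply Rle_Rpower; lra].
  - rewrite <- Rpower_pow by auto. unfold u. rewrite Rpower_mult.
    replace (1 / 4 * INR 4) with 1 by (simpl; field). rewrite Rpower_1; auto.
  - rewrite <- Rpower_pow by auto. unfold u, mL. rewrite Rpower_mult. f_equal. simpl. field.
Qed.

Definition rho (L : nat) : R := INR (S (2 * L)) ^ 2 * exp (- (Rpower (INR L) (1/4)) ^ 2 / 16).

Lemma per_L L e0 : (1 <= L)%nat -> in_Omega0 L e0 ->
  (forall x : Z, (- Z.of_nat L <= x <= Z.of_nat L)%Z ->
          Rmin (IZR x + INR L) (Rmin (INR L - IZR x) (Rpower (INR L) (3/4))) <= IZR (e0 x)) ->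
  rho L <= /2 ->
  forall j, 1 - p_stay L j e0 <= 4 * rho L * (2 * INR j + 1).
Proof. intros HL HO H0 Hr j.
  destruct (u_facts L HL) as [Hu1 [HLu Hm]]. set (u := Rpower (INR L) (1/4)) in *.
  set (th := / (8 * u)).
  assert (Hth : 0 <= th <= /2).
  { unfold th. split. left; apply Rinv_0_lt_compat; lra.
    apply Rle_trans with (/ 8). apply Rinv_le_contravar; lra. lra. }
  assert (Hexp : 2 * INR (2 * L) * th ^ 2 - th * mL L = - u ^ 2 / 16).
  { rewrite mult_INR, HLu, Hm. unfold th. simpl (INR 2). field. lra. }
  set (n1 := INR (S (2 * L))).
  assert (Hn1 : 1 <= n1) by (unfold n1; apply (le_INR 1); lia).
  set (E := n1 * (2 ^ (2 * L) * exp (- u ^ 2 / 16))).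
  set (M := INR (length (OL L))).
  assert (HM := M_lower L). fold n1 M in HM.
  assert (HEM : E <= rho L * M).
  { unfold E, rho. fold u n1.
    apply Rle_trans with (n1 * ((n1 * M) * exp (- u ^ 2 / 16)));
      [apply Rmult_le_compat_l; [lra| apply Rmult_le_compat_r; [left; apply exp_pos| auto]] | right; ring]. }
  set (B := Rs (map (fun s => 1 - Defs.ind (good L (conf L s))) (OL L))).
  set (G := Rs (map (fun s => Defs.ind (leb L e0 s)) (OL L))).
  assert (HB : B <= E).
  { apply Rle_trans with (Rs (map (fun s => Rs (map (fun i => ibot (mL L) (hgt s i)) (seq 0 (S (2 * L))))) (OL L))).
    - apply sum_le. intros s Hs. apply bad_pt; auto.
    - unfold E. rewrite <- Hexp. apply E_bound with (-1); auto.
      intro h. split; [apply ibot_b|]. unfold ibot. destruct (Rlt_dec _ _).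
      + apply Rle_trans with (1 + (-1 * th * IZR h - th * mL L)); [|apply exp_ineq1_le]. nra.
      + left; apply exp_pos. }
  assert (HG : M - G <= E).
  { assert (EQ : Rs (map (fun s => 1 - Defs.ind (leb L e0 s)) (OL L)) = M - G).
    { unfold M, G. rewrite (sum_ext (fun s => 1 - Defs.ind (leb L e0 s)) (fun s => 1 + (-1) * Defs.ind (leb L e0 s))) by (intros; ring).
      rewrite sum_plus, sum_scal, sum_const. ring. }
    rewrite <- EQ.
    apply Rle_trans with (Rs (map (fun s => Rs (map (fun i => itop (mL L) (hgt s i)) (seq 0 (S (2 * L))))) (OL L))).
    - apply sum_le. intros s Hs. apply top_pt; auto.
    - unfold E. rewrite <- Hexp. apply E_bound with 1; auto.
      intro h. split; [apply itop_b|]. unfold itop. destruct (Rlt_dec _ _).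
      + apply Rle_trans with (1 + (1 * th * IZR h - th * mL L)); [|apply exp_ineq1_le]. nra.
      + left; apply exp_pos. }
  assert (HMpos : 0 < M).
  { assert (0 < 2 ^ (2 * L)) by (apply pow_lt; lra). assert (0 < n1 * M) by lra.
    assert (0 <= M) by (unfold M; apply pos_INR). nra. }
  assert (HGM : M / 2 <= G).
  { assert (rho L * M <= /2 * M) by (apply Rmult_le_compat_r; lra). lra. }
  assert (Hc := coupling L (2 * j) e0 HL HO). fold G in Hc.
  assert (Hs := stationarity L (2 * j) HL). fold B in Hs.
  assert (Hk := key_lazy L (2 * j) j e0 HL). assert (Hb := beta_half j).
  assert (Pp := p_stay_bounds L j e0). assert (Pc := pc_bounds L (2 * j) e0).
  set (X := 1 - pc L (2 * j) e0) in *.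
  assert (HX : 1 - p_stay L j e0 <= 2 * X).
  { assert (0 <= 1 - p_stay L j e0) by lra. nra. }
  assert (Hk2 : INR (S (2 * j)) = 2 * INR j + 1) by (rewrite S_INR, mult_INR; simpl; ring).
  rewrite Hk2 in Hs.
  assert (HX2 : M / 2 * X <= (2 * INR j + 1) * (rho L * M)).
  { assert (0 <= X) by lra. assert (M / 2 * X <= G * X) by (apply Rmult_le_compat_r; lra).
    assert (0 <= 2 * INR j + 1) by (assert (0 <= INR j) by apply pos_INR; lra).
    assert ((2 * INR j + 1) * B <= (2 * INR j + 1) * (rho L * M)) by (apply Rmult_le_compat_l; lra).
    lra. }
  assert (X <= 2 * rho L * (2 * INR j + 1)).
  { apply (Rmult_le_reg_l (M / 2)); [lra|]. replace (M / 2 * (2 * rho L * (2 * INR j + 1))) with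
      ((2 * INR j + 1) * (rho L * M)) by field. auto. }
  lra.
Qed.

Lemma exp_le' a b : a <= b -> exp a <= exp b.
Proof. intro H. destruct (Rle_lt_or_eq_dec _ _ H). left; apply exp_increasing; auto. subst; lra. Qed.

Lemma asym_u d : 0 < d -> exists U, 1 <= U /\ forall u, U <= u -> 180 * u ^ 12 * exp (u - u ^ 2 / 16) < d.
Proof. intro Hd. set (K := 180 * 224 ^ 7).
  assert (HK : 0 < K) by (unfold K; apply Rmult_lt_0_compat; [lra| apply pow_lt; lra]).
  exists (Rmax 32 (K / d + 1)). split; [apply Rle_trans with 32; [lra| apply Rmax_l]|].
  intros u Hu. assert (H32 : 32 <= u) by (apply Rle_trans with (Rmax 32 (K / d + 1)); auto; apply Rmax_l).
  assert (HKd : K / d + 1 <= u) by (apply Rle_trans with (Rmax 32 (K / d + 1)); auto; apply Rmax_r).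
  set (y := u ^ 2 / 32).
  assert (E1 : exp (u - u ^ 2 / 16) <= / exp y).
  { rewrite <- exp_Ropp. apply exp_le'. unfold y. nra. }
  assert (E2 : u ^ 14 / 224 ^ 7 <= exp y).
  { replace (exp y) with (exp (y / 7) ^ 7) by (rewrite exp_pow'; f_equal; simpl; field).
    replace (u ^ 14 / 224 ^ 7) with ((y / 7) ^ 7) by (unfold y; field).
    apply pow_incr. split. unfold y. assert (0 <= u ^ 2) by nra. lra.
    assert (A := exp_ineq1_le (y / 7)). assert (0 <= y / 7) by (unfold y; nra). lra. }
  assert (Hu0 : 0 < u) by lra.
  assert (P14 : 0 < u ^ 14 / 224 ^ 7) by (apply Rdiv_lt_0_compat; apply pow_lt; lra).
  assert (E3 : / exp y <= 224 ^ 7 / u ^ 14).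
  { replace (224 ^ 7 / u ^ 14) with (/ (u ^ 14 / 224 ^ 7)) by (field; lra).
    apply Rinv_le_contravar; auto. }
  assert (P12 : 0 < u ^ 12) by (apply pow_lt; lra).
  apply Rle_lt_trans with (180 * u ^ 12 * (224 ^ 7 / u ^ 14)).
  { apply Rmult_le_compat_l; [lra|]. lra. }
  replace (180 * u ^ 12 * (224 ^ 7 / u ^ 14)) with (K / u ^ 2) by (unfold K; field; lra).
  assert (u <= u ^ 2) by nra.
  apply Rle_lt_trans with (K / u).
  { apply Rmult_le_compat_l; [lra|]. apply Rinv_le_contravar; lra. }
  apply (Rmult_lt_reg_r u); [lra|]. unfold Rdiv. rewrite Rmult_assoc, Rinv_l, Rmult_1_r by lra.
  assert (K = K / d * d) by (field; lra). assert (K / d * d < u * d) by (apply Rmult_lt_compat_r; lra). lra.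
Qed.

Definition lamL (L : nat) : R := nclocks L * exp (Rpower (INR L) (1/4)).

Lemma main_bound L : (1 <= L)%nat ->
  4 * rho L * (2 * lamL L + 1) <= 180 * (Rpower (INR L) (1/4)) ^ 12 * exp (Rpower (INR L) (1/4) - (Rpower (INR L) (1/4)) ^ 2 / 16).
Proof. intro HL. destruct (u_facts L HL) as [Hu1 [HLu _]]. set (u := Rpower (INR L) (1/4)) in *.
  unfold rho, lamL. fold u. set (a := INR L). set (x := exp u). set (y := exp (- u ^ 2 / 16)).
  assert (Ha : 1 <= a) by (unfold a; apply (le_INR 1); auto).
  assert (Hx : 1 <= x) by (unfold x; apply Rle_trans with (1 + u); [lra| apply exp_ineq1_le]).
  assert (Hy : 0 < y) by apply exp_pos.
  assert (Hn1 : INR (S (2 * L)) = 2 * a + 1) by (unfold a; rewrite S_INR, mult_INR; simpl; ring).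
  assert (HN : 0 <= nclocks L <= 2 * a).
  { unfold nclocks, a. rewrite length_sites. split. apply pos_INR. apply Rle_trans with (INR (2 * L)); [apply le_INR; lia | rewrite mult_INR; simpl; lra]. }
  rewrite Hn1. replace (exp (u - u ^ 2 / 16)) with (x * y) by (unfold x, y; rewrite <- exp_plus; f_equal; field).
  replace (u ^ 12) with (a ^ 3) by (unfold a; rewrite HLu; ring).
  assert (A1 : (2 * a + 1) ^ 2 <= 9 * a ^ 2) by nra.
  assert (A2 : 2 * nclocks L * x + 1 <= 5 * a * x) by nra.
  assert (0 <= 2 * nclocks L * x + 1) by nra.
  apply Rle_trans with (4 * (9 * a ^ 2 * y) * (5 * a * x)).
  - apply Rmult_le_compat; [nra| lra| | lra]. apply Rmult_le_compat_l; [lra|].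
    apply Rmult_le_compat_r; lra.
  - right. ring.
Qed.

Theorem lemmaA1 :
  forall eta0 : nat -> Z -> Z,
    (forall L : nat, (1 <= L)%nat ->
       in_Omega0 L (eta0 L) /\
       (forall x : Z, (- Z.of_nat L <= x <= Z.of_nat L)%Z ->
          Rmin (IZR x + INR L) (Rmin (INR L - IZR x) (Rpower (INR L) (3/4)))
            <= IZR (eta0 L x))) ->
    exists P : nat -> R,
      (forall L : nat, (1 <= L)%nat ->
         infinite_sum
           (stay_term L (eta0 L) (exp (Rpower (INR L) (1/4)))) (P L)) /\
      Un_cv P 1.
Proof.
  intros eta0 Hyp.
  assert (Hlam : forall L, 0 <= lamL L).
  { intro L. unfold lamL. apply Rmult_le_pos. unfold nclocks; apply pos_INR. left; apply exp_pos. }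
  assert (Hb : forall L k, 0 <= stay_term L (eta0 L) (exp (Rpower (INR L) (1/4))) k <= po (lamL L) k).
  { intros L k. change (stay_term L (eta0 L) (exp (Rpower (INR L) (1/4))) k) with
      (po (lamL L) k * p_stay L k (eta0 L)).
    assert (A := po_pos (lamL L) k (Hlam L)). assert (B := p_stay_bounds L k (eta0 L)). nra. }
  set (S := fun L => Rseries_CV_comp _ _ (Hb L) (exist _ 1 (po_cv (lamL L) (Hlam L)))).
  exists (fun L => proj1_sig (S L)). split.
  - intros L _. exact (proj2_sig (S L)).
  - intros eps Heps.
    assert (Hd : 0 < Rmin eps (/2)) by (apply Rmin_pos; lra).
    destruct (asym_u _ Hd) as [U [HU1 HU]].
    destruct (INR_unbounded (U ^ 4)) as [N HN].
    exists (max N 1). intros L HL'.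
    assert (HL : (1 <= L)%nat) by lia.
    destruct (Hyp L HL) as [HO H0].
    destruct (u_facts L HL) as [Hu1 [HLu _]].
    assert (HuU : U <= Rpower (INR L) (1/4)).
    { destruct (Rle_lt_dec U (Rpower (INR L) (1/4))) as [|Hlt]; auto. exfalso.
      assert (A := pow_incr (Rpower (INR L) (1/4)) U 4 ltac:(lra)).
      assert (INR N <= INR L) by (apply le_INR; lia). lra. }
    assert (Hmb := main_bound L HL). specialize (HU _ HuU).
    assert (Hmin1 := Rmin_l eps (/2)). assert (Hmin2 := Rmin_r eps (/2)).
    assert (Hrho0 : 0 <= rho L).
    { unfold rho. apply Rmult_le_pos. apply pow_le, pos_INR. left; apply exp_pos. }
    assert (Hlt : 4 * rho L * (2 * lamL L + 1) < Rmin eps (/2)) by lra.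
    assert (Hrho : rho L <= /2).
    { assert (rho L <= 4 * rho L * (2 * lamL L + 1)) by (assert (Hl := Hlam L); nra). lra. }
    assert (Hper := per_L L (eta0 L) HL HO H0 Hrho).
    assert (Hs := series_bounds (lamL L) (fun k => p_stay L k (eta0 L)) (4 * rho L) (proj1_sig (S L))
      (Hlam L) ltac:(lra) (fun k => p_stay_bounds L k (eta0 L))
      Hper (proj2_sig (S L))).
    unfold Rdist. apply Rabs_def1; lra.
Qed.
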